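(* Let $(A,B,Z,T)$ be a Hopf-Galois system over a field $k$. Then the bialgebras $A$ and $B$ are Hopf algebras (i.e. admit antipodes).
   Context: All tensor products are over a field $k$; $m_X$, $u_X$ denote multiplication and unit of an algebra $X$, $\Delta_X,\varepsilon_X$ comultiplication and counit of a bialgebra $X$. A Hopf-Galois system consists of four non-zero $k$-algebras $(A,B,Z,T)$ such that: (HG1) $A$ and $B$ are bialgebras; (HG2) $Z$ is an $A$-$B$-bicomodule algebra, with left $A$-coaction $\alpha:Z\to A\otimes Z$ and right $B$-coaction $\beta:Z\to Z\otimes B$; (HG3) there are algebra morphisms $\gamma:A\to Z\otimes T$ and $\delta:B\to T\otimes Z$ such that $(\gamma\otimes 1_Z)\circ\alpha=(1_Z\otimes\delta)\circ\beta$, $(\alpha\otimes 1_T)\circ\gamma=(1_A\otimes\gamma)\circ\Delta_A$, and $(1_T\otimes\beta)\circ\delta=(\delta\otimes 1_B)\circ\Delta_B$; (HG4) there is a linear map $S:T\to Z$ such that $m_Z\circ(1_Z\otimes S)\circ\gamma=u_Z\circ\varepsilon_A$ and $m_Z\circ(S\otimes 1_Z)\circ\delta=u_Z\circ\varepsilon_B$. *)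

(* Defs.v *)
From mathcomp Require Import all_boot all_algebra.
Set Implicit Arguments. Unset Strict Implicit. Unset Printing Implicit Defensive.
Import GRing.Theory.
Local Open Scope ring_scope.

(* Tensor products over a field k are encoded by formal finite sums
   (sequences of pure tensors); two formal sums are equal in the tensor
   product iff every (bi/tri)linear form to k takes the same value on them
   (over a field, U (x) V is separated by its dual Bil(U,V;k)). *)

Section Tensors.
Variable k : fieldType.

Definition bilin (U V : lmodType k) (b : U -> V -> k) : Prop :=
  (forall (a : k) u u' v, b (a *: u + u') v = a * b u v + b u' v) /\
  (forall (a : k) u v v', b u (a *: v + v') = a * b u v + b u v').

Definition trilin (U V W : lmodType k) (c : U -> V -> W -> k) : Prop :=
  [/\ (forall (a : k) u u' v w, c (a *: u + u') v w = a * c u v w + c u' v w),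
      (forall (a : k) u v v' w, c u (a *: v + v') w = a * c u v w + c u v' w) &
      (forall (a : k) u v w w', c u v (a *: w + w') = a * c u v w + c u v w')].

Definition teq2 (U V : lmodType k) (t t' : seq (U * V)) : Prop :=
  forall b : U -> V -> k, bilin b ->
    \sum_(p <- t) b p.1 p.2 = \sum_(p <- t') b p.1 p.2.

Definition teq3 (U V W : lmodType k) (t t' : seq (U * V * W)) : Prop :=
  forall c : U -> V -> W -> k, trilin c ->
    \sum_(p <- t) c p.1.1 p.1.2 p.2 = \sum_(p <- t') c p.1.1 p.1.2 p.2.

Definition tscale (U V : lmodType k) (a : k) (t : seq (U * V)) : seq (U * V) :=
  [seq (a *: p.1, p.2) | p <- t].

Definition tlinear (X U V : lmodType k) (f : X -> seq (U * V)) : Prop :=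
  forall (a : k) x y, teq2 (f (a *: x + y)) (tscale a (f x) ++ f y).

Definition tmul (U V : algType k) (t s : seq (U * V)) : seq (U * V) :=
  [seq (p.1 * q.1, p.2 * q.2) | p <- t, q <- s].

Definition talg_morph (X U V : algType k) (f : X -> seq (U * V)) : Prop :=
  [/\ tlinear f, teq2 (f 1) [:: (1, 1)] &
      forall x y, teq2 (f (x * y)) (tmul (f x) (f y))].

(* (f (x) 1) t  and  (1 (x) f) t *)
Definition tmap_l (U V W X : Type) (f : U -> seq (V * W)) (t : seq (U * X))
  : seq (V * W * X) := [seq ((q.1, q.2), p.2) | p <- t, q <- f p.1].
Definition tmap_r (U V W X : Type) (f : X -> seq (V * W)) (t : seq (U * X))
  : seq (U * V * W) := [seq ((p.1, q.1), q.2) | p <- t, q <- f p.2].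

Definition alg_morph_k (X : algType k) (e : X -> k) : Prop :=
  [/\ forall (a : k) x y, e (a *: x + y) = a * e x + e y,
      e 1 = 1 & forall x y, e (x * y) = e x * e y].

Definition is_bialgebra (A : algType k) (D : A -> seq (A * A)) (e : A -> k)
  : Prop :=
  [/\ talg_morph D, alg_morph_k e,
      (forall a, teq3 (tmap_l D (D a)) (tmap_r D (D a))),
      (forall a, \sum_(p <- D a) e p.1 *: p.2 = a) &
      (forall a, \sum_(p <- D a) e p.2 *: p.1 = a)].

Definition has_antipode (A : algType k) (D : A -> seq (A * A)) (e : A -> k)
  : Prop :=
  exists S : {linear A -> A},
    (forall a, \sum_(p <- D a) S p.1 * p.2 = e a *: 1) /\
    (forall a, \sum_(p <- D a) p.1 * S p.2 = e a *: 1).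

Definition hopf_galois_system (A B Z T : algType k)
  (DA : A -> seq (A * A)) (eA : A -> k)
  (DB : B -> seq (B * B)) (eB : B -> k)
  (alpha : Z -> seq (A * Z)) (beta : Z -> seq (Z * B))
  (gamma : A -> seq (Z * T)) (delta : B -> seq (T * Z))
  (S : {linear T -> Z}) : Prop :=
  [/\ is_bialgebra DA eA /\ is_bialgebra DB eB,
      (* HG2: Z is an A-B-bicomodule algebra *)
      [/\ [/\ talg_morph alpha,
          (forall z, teq3 (tmap_l DA (alpha z)) (tmap_r alpha (alpha z))) &
          (forall z, \sum_(p <- alpha z) eA p.1 *: p.2 = z)],
          talg_morph beta,
          (forall z, teq3 (tmap_l beta (beta z)) (tmap_r DB (beta z))),
          (forall z, \sum_(p <- beta z) eB p.2 *: p.1 = z) &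
          (forall z, teq3 (tmap_r beta (alpha z)) (tmap_l alpha (beta z)))],
      [/\ talg_morph gamma, talg_morph delta,
          (forall z, teq3 (tmap_l gamma (alpha z)) (tmap_r delta (beta z))),
          (forall a, teq3 (tmap_l alpha (gamma a)) (tmap_r gamma (DA a))) &
          (forall b, teq3 (tmap_r beta (delta b)) (tmap_l delta (DB b)))] &
      (forall a, \sum_(p <- gamma a) p.1 * S p.2 = eA a *: 1) /\
      (forall b, \sum_(p <- delta b) S p.1 * p.2 = eB b *: 1)].

End Tensors.

(* Main.v *)
Require Import Defs.
From HB Require Import structures.
From mathcomp Require Import all_boot all_algebra.
From mathcomp Require Import boolp classical_sets.
Set Implicit Arguments. Unset Strict Implicit. Unset Printing Implicit Defensive.
Import GRing.Theory.
Local Open Scope ring_scope.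

Section Sep.
Variable k : fieldType.

Definition lin (V : lmodType k) (F : V -> k) :=
  forall (a : k) x y, F (a *: x + y) = a * F x + F y.

Lemma lin0 (V : lmodType k) (F : V -> k) : lin F -> F 0 = 0.
Proof.
move=> hF; have := hF 1 0 0; rewrite scaler0 addr0 mul1r => h.
by apply: (addIr (F 0)); rewrite add0r -h.
Qed.

Lemma linD (V : lmodType k) (F : V -> k) x y : lin F -> F (x + y) = F x + F y.
Proof. by move=> hF; rewrite -[x]scale1r hF mul1r scale1r. Qed.

Lemma linZ (V : lmodType k) (F : V -> k) a x : lin F -> F (a *: x) = a * F x.
Proof. by move=> hF; rewrite -[a *: x]addr0 hF (lin0 hF) addr0. Qed.

Lemma lin_sum (V : lmodType k) (F : V -> k) I (l : seq I) (g : I -> V) :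
  lin F -> F (\sum_(i <- l) g i) = \sum_(i <- l) F (g i).
Proof.
move=> hF; elim: l => [|i l IH]; first by rewrite !big_nil (lin0 hF).
by rewrite !big_cons (linD _ _ hF) IH.
Qed.

Section Zorn_part.
Variables (V : lmodType k) (v : V).
Hypothesis v0 : v != 0.

Definition goodP (X : set V) :=
  [/\ (forall x y, X x -> X y -> X (x + y)),
      (forall (a : k) x, X x -> X (a *: x)) & ~ X v].

Lemma exists_max : exists A, goodP A /\ forall B, (A `<` B)%classic -> ~ goodP B.
Proof.
apply: Zorn_bigcup => F FP Ftot; split.
- move=> x y [X FX Xx] [Y FY Yy].
  have [XY|YX] := Ftot X Y FX FY.
  + by exists Y => //; have [+ _ _] := FP Y FY; apply => //; exact: XY.
  + by exists X => //; have [+ _ _] := FP X FX; apply => //; exact: YX.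
- by move=> a x [X FX Xx]; exists X => //; have [_ + _] := FP X FX; apply.
- by move=> [X FX Xv]; have [_ _] := FP X FX; apply.
Qed.

Lemma sep_exists : exists F : V -> k, lin F /\ F v = 1.
Proof.
have [A [[Aadd Ascl Av] Amax]] := exists_max.
pose A0 z := A z \/ z = 0.
have A0add x y : A0 x -> A0 y -> A0 (x + y).
  move=> [Ax|->] [Ay|->]; rewrite ?addr0 ?add0r; by [left; apply: Aadd|left|left|right].
have A0scl a x : A0 x -> A0 (a *: x).
  by move=> [Ax|->]; [left; apply: Ascl|right; rewrite scaler0].
have A0v : ~ A0 v by move=> [//|/eqP]; rewrite (negbTE v0).
have ex x : exists c : k, A0 (x - c *: v).
  pose B : set V := fun y => exists a c, A0 a /\ y = a + c *: x.
  have AB : (A `<=` B)%classic by move=> y Ay; exists y, 0; rewrite scale0r addr0; split=> //; left.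
  have [Bv|nBv] := pselect (B v).
  - case: Bv => a [c [A0a ea]].
    have [c0|cn0] := eqVneq c 0.
      by exfalso; apply: A0v; move: ea; rewrite c0 scale0r addr0 => ->.
    exists c^-1.
    have -> : x - c^-1 *: v = (- c^-1) *: a.
      by rewrite ea scalerDr scalerA mulVf // scale1r scaleNr opprD addrCA subrr addr0.
    exact: A0scl.
  - have gB : goodP B.
      split=> //.
      + move=> _ _ [a [c [A0a ->]]] [a' [c' [A0a' ->]]].
        exists (a + a'), (c + c'); split; first exact: A0add.
        by rewrite scalerDl addrACA.
      + move=> e _ [a [c [A0a ->]]]; exists (e *: a), (e * c); split; first exact: A0scl.
        by rewrite scalerDr scalerA.
    have BA : (B `<=` A)%classic.
      apply: contrapT => nBA; apply: (Amax B) => //; split => //.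
    have : B x by exists 0, 1; rewrite add0r scale1r; split => //; right.
    by move/BA => Ax; exists 0; rewrite scale0r subr0; left.
have uniq x c c' : A0 (x - c *: v) -> A0 (x - c' *: v) -> c = c'.
  move=> h h'; apply: contrapT => /eqP; rewrite -subr_eq0 => cc.
  apply: A0v.
  have : A0 ((x - c' *: v) - (x - c *: v)) by apply: A0add => //; rewrite -scaleN1r; apply: A0scl.
  have -> : (x - c' *: v) - (x - c *: v) = (c - c') *: v.
    by rewrite opprB addrC addrA addrNK scalerBl.
  move=> /(A0scl (c - c')^-1).
  by rewrite scalerA mulVf // scale1r.
pose F x := projT1 (cid (ex x)).
have FP x : A0 (x - F x *: v) by rewrite /F; case: cid.
exists F; split.
- move=> a x y; apply: (uniq (a *: x + y)) (FP _) _.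
  have -> : a *: x + y - (a * F x + F y) *: v = a *: (x - F x *: v) + (y - F y *: v).
    by rewrite scalerBr scalerA scalerDl opprD addrACA.
  by apply: A0add => //; apply: A0scl.
- by apply: (uniq v) (FP v) _; rewrite scale1r subrr; right.
Qed.
End Zorn_part.

Lemma sep_eq (V : lmodType k) (x y : V) :
  (forall F : V -> k, lin F -> F x = F y) -> x = y.
Proof.
move=> h; apply/eqP; rewrite -subr_eq0; apply: contraT => nz.
have [F [lF F1]] := sep_exists nz.
move: F1; rewrite -scaleN1r addrC (lF) mulN1r (h F lF) addNr => /eqP.
by rewrite eq_sym oner_eq0.
Qed.

Definition lmap (U V : lmodType k) (g : U -> V) :=
  forall (a : k) x y, g (a *: x + y) = a *: g x + g y.

Definition bil (U V : lmodType k) (f : U -> V -> k) :=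
  (forall y, lin (fun x => f x y)) /\ (forall x, lin (f x)).

Definition tril (U V W : lmodType k) (c : U -> V -> W -> k) :=
  [/\ (forall y w, lin (fun x => c x y w)), (forall x w, lin (fun y => c x y w))
    & (forall x y, lin (c x y))].

Lemma lin_comp (U V : lmodType k) (F : V -> k) (g : U -> V) :
  lin F -> lmap g -> lin (fun x => F (g x)).
Proof. by move=> hF hg a x y; rewrite hg hF. Qed.

Lemma lin_sumf (V : lmodType k) I (l : seq I) (G : I -> V -> k) :
  (forall i, lin (G i)) -> lin (fun x => \sum_(i <- l) G i x).
Proof.
move=> hG a x y; rewrite mulr_sumr -big_split /=.
by apply: eq_bigr => i _; rewrite hG.
Qed.

Lemma lin_mull (V : lmodType k) (c : k) (F : V -> k) : lin F -> lin (fun x => c * F x).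
Proof. by move=> hF a x y; rewrite hF mulrDr mulrCA. Qed.

Lemma lin_mulr (V : lmodType k) (c : k) (F : V -> k) : lin F -> lin (fun x => F x * c).
Proof. by move=> hF a x y; rewrite hF mulrDl mulrA. Qed.

Lemma lmap_mulr (A : algType k) (z : A) : lmap (fun x : A => x * z).
Proof. by move=> a x y; rewrite mulrDl scalerAl. Qed.

Lemma lmap_mull (A : algType k) (z : A) : lmap (fun x : A => z * x).
Proof. by move=> a x y; rewrite mulrDr scalerAr. Qed.

Lemma lmap_comp (U V W : lmodType k) (f : V -> W) (g : U -> V) :
  lmap f -> lmap g -> lmap (fun x => f (g x)).
Proof. by move=> hf hg a x y; rewrite hg hf. Qed.

Lemma lmap_sum (U V : lmodType k) (g : U -> V) I (l : seq I) (h : I -> U) :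
  lmap g -> g (\sum_(i <- l) h i) = \sum_(i <- l) g (h i).
Proof.
move=> hg; have g0 : g 0 = 0.
  have := hg 1 0 0; rewrite scaler0 addr0 scale1r => e.
  by apply: (addIr (g 0)); rewrite add0r -e.
elim: l => [|i l IH]; first by rewrite !big_nil.
rewrite !big_cons. have := hg 1 (h i) (\sum_(j <- l) h j). rewrite !scale1r => ->. by rewrite IH.
Qed.

Lemma bil_suml (U V : lmodType k) (f : U -> V -> k) I (l : seq I) (g : I -> U) y :
  bil f -> f (\sum_(i <- l) g i) y = \sum_(i <- l) f (g i) y.
Proof. by move=> [h1 _]; rewrite (lin_sum _ _ (h1 y)). Qed.

Lemma bil_sumr (U V : lmodType k) (f : U -> V -> k) I (l : seq I) (g : I -> V) x :
  bil f -> f x (\sum_(i <- l) g i) = \sum_(i <- l) f x (g i).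
Proof. by move=> [_ h2]; rewrite (lin_sum _ _ (h2 x)). Qed.

End Sep.

Section Core.
Variables (k : fieldType) (H Z : algType k) (T : lmodType k).
Variables (D : H -> seq (H * H)) (e : H -> k) (al : Z -> seq (H * Z))
  (ga : H -> seq (Z * T)) (S : T -> Z).
Hypothesis Slin : lmap S.
Hypothesis Dlin : forall f : H -> H -> k, bil f -> lin (fun x => \sum_(p <- D x) f p.1 p.2).
Hypothesis Dco : forall c : H -> H -> H -> k, tril c -> forall x,
  \sum_(p <- D x) \sum_(q <- D p.1) c q.1 q.2 p.2 =
  \sum_(p <- D x) \sum_(q <- D p.2) c p.1 q.1 q.2.
Hypothesis elin : lin e.
Hypothesis cuL : forall x, \sum_(p <- D x) e p.1 *: p.2 = x.
Hypothesis cuR : forall x, \sum_(p <- D x) e p.2 *: p.1 = x.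
Hypothesis allin : forall f : H -> Z -> k, bil f -> lin (fun z => \sum_(p <- al z) f p.1 p.2).
Hypothesis almul : forall f : H -> Z -> k, bil f -> forall x y,
  \sum_(p <- al (x * y)) f p.1 p.2 = \sum_(p <- al x) \sum_(q <- al y) f (p.1 * q.1) (p.2 * q.2).
Hypothesis al1 : forall f : H -> Z -> k, bil f -> \sum_(p <- al 1) f p.1 p.2 = f 1 1.
Hypothesis alco : forall c : H -> H -> Z -> k, tril c -> forall z,
  \sum_(p <- al z) \sum_(q <- D p.1) c q.1 q.2 p.2 =
  \sum_(p <- al z) \sum_(q <- al p.2) c p.1 q.1 q.2.
Hypothesis galin : forall f : Z -> T -> k, bil f -> lin (fun a => \sum_(p <- ga a) f p.1 p.2).
Hypothesis G1 : forall c : H -> Z -> T -> k, tril c -> forall a,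
  \sum_(p <- ga a) \sum_(q <- al p.1) c q.1 q.2 p.2 =
  \sum_(p <- D a) \sum_(q <- ga p.2) c p.1 q.1 q.2.
Hypothesis G2 : forall a, \sum_(p <- ga a) p.1 * S p.2 = e a *: 1.
Hypothesis Star : forall f : Z -> Z -> k, bil f -> forall z,
  \sum_(p <- al z) \sum_(q <- ga p.1) f q.1 (S q.2 * p.2) = f z 1.

Lemma F1 (f : H -> Z -> k) a w : bil f ->
  \sum_(q <- ga a) \sum_(r <- al q.1) f r.1 (r.2 * S q.2 * w) = f a w.
Proof.
move=> bf; have [f1 f2] := bf.
rewrite (G1 (c := fun x z t => f x (z * S t * w))); last first.
  split=> [y t|x t|x z].
  - exact: f1.
  - exact: (lin_comp (f2 x) (lmap_comp (lmap_mulr w) (lmap_mulr (S t)))).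
  - apply: (lin_comp (f2 x)) => b t t'.
    by rewrite Slin mulrDr mulrDl -scalerAr -scalerAl.
transitivity (\sum_(p <- D a) f p.1 (e p.2 *: w)).
  apply: eq_bigr => p _ /=.
  rewrite -(lin_sum _ _ (f2 p.1)) -(lmap_sum _ _ (lmap_mulr w)) G2.
  by rewrite -scalerAl mul1r.
transitivity (\sum_(p <- D a) f (e p.2 *: p.1) w).
  by apply: eq_bigr => p _; rewrite (linZ _ _ (f2 _)) (linZ _ _ (f1 _)).
by rewrite -(bil_suml _ _ _ bf) cuR.
Qed.


Lemma tril_b12 (U V W : lmodType k) (c : U -> V -> W -> k) w : tril c -> bil (fun x y => c x y w).
Proof. by case=> t1 t2 t3; split=> [y|x]; [exact: t1|exact: t2]. Qed.
Lemma tril_b13 (U V W : lmodType k) (c : U -> V -> W -> k) y : tril c -> bil (fun x w => c x y w).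
Proof. by case=> t1 t2 t3; split=> [w|x]; [exact: t1|exact: t3]. Qed.
Lemma tril_b23 (U V W : lmodType k) (c : U -> V -> W -> k) x : tril c -> bil (fun y w => c x y w).
Proof. by case=> t1 t2 t3; split=> [w|y]; [exact: t2|exact: t3]. Qed.

Lemma StepA (c : H -> H -> Z -> k) x y : tril c ->
  \sum_(q <- ga x) \sum_(q' <- ga y) \sum_(r <- al q.1) \sum_(r' <- al q'.1)
     c r.1 r'.1 (r.2 * r'.2 * S q'.2 * S q.2) = c x y 1.
Proof.
move=> tc; have [t1 t2 t3] := tc.
rewrite -(F1 x 1 (tril_b13 y tc)).
apply: eq_bigr => q _; rewrite exchange_big; apply: eq_bigr => r _ /=.
rewrite mulr1.
have bf : bil (fun a m => c r.1 a (r.2 * m)).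
  by split=> [m|a]; [exact: t2| exact: (lin_comp (t3 _ _) (lmap_mull _))].
rewrite -(F1 y (S q.2) bf).
by apply: eq_bigr => q' _; apply: eq_bigr => r' _ /=; rewrite ?mulrA.
Qed.

Lemma StepC (d : Z -> Z -> Z -> k) x y w : tril d ->
  \sum_(r <- al x) \sum_(m <- al (r.2 * y)) \sum_(q <- ga r.1) \sum_(q' <- ga m.1)
     d q.1 (S q.2 * q'.1) (S q'.2 * m.2 * w) = d x y w.
Proof.
move=> td; have [t1 t2 t3] := td.
have bf : bil (fun u v => d u (v * y) w).
  by split=> [v|u]; [exact: t1| exact: (lin_comp (t2 _ _) (lmap_mulr _))].
rewrite -[in RHS](mul1r y) -(Star bf x).
apply: eq_bigr => r _; rewrite exchange_big; apply: eq_bigr => q _ /=.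
have bg : bil (fun u v => d q.1 (S q.2 * u) (v * w)).
  split=> [v|u]; first exact: (lin_comp (t2 _ _) (lmap_mull _)).
  exact: (lin_comp (t3 _ _) (lmap_mulr _)).
rewrite -mulrA -[w in RHS]mul1r -(Star bg (r.2 * y)).
by apply: eq_bigr => m _; apply: eq_bigr => q' _ /=; rewrite ?mulrA.
Qed.

Lemma StepD (g : H -> H -> Z -> k) x y w : tril g ->
  \sum_(r <- al x) \sum_(r' <- al y) \sum_(p <- D r.1) g p.1 (p.2 * r'.1) (r.2 * r'.2 * w) =
  \sum_(r <- al x) \sum_(m <- al (r.2 * y)) g r.1 m.1 (m.2 * w).
Proof.
move=> tg; have [t1 t2 t3] := tg.
pose c := fun a1 a2 z => \sum_(r' <- al y) g a1 (a2 * r'.1) (z * r'.2 * w).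
have tc : tril c.
  split=> [a2 z|a1 z|a1 a2].
  - by apply: lin_sumf => r'; exact: t1.
  - by apply: lin_sumf => r'; exact: (lin_comp (t2 _ _) (lmap_mulr _)).
  - apply: lin_sumf => r'.
    exact: (lin_comp (t3 _ _) (lmap_comp (lmap_mulr _) (lmap_mulr _))).
transitivity (\sum_(r <- al x) \sum_(p <- D r.1) c p.1 p.2 r.2).
  by apply: eq_bigr => r _; rewrite exchange_big.
rewrite alco //; apply: eq_bigr => r _.
have bf : bil (fun a z => g r.1 a (z * w)).
  by split=> [z|a]; [exact: t2|exact: (lin_comp (t3 _ _) (lmap_mulr _))].
by rewrite (almul bf).
Qed.

Definition Phi (c : H -> H -> Z -> k) := fun x y w =>
  \sum_(r <- al x) \sum_(r' <- al y) c r.1 r'.1 (r.2 * r'.2 * w).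
Definition Om (c : H -> H -> Z -> k) := fun a b w =>
  \sum_(q <- ga a) \sum_(q' <- ga b) Phi c q.1 (S q.2 * q'.1) (S q'.2 * w).
Definition Cp (c : H -> H -> Z -> k) := fun a b m =>
  \sum_(p <- D a) Om c p.1 (p.2 * b) m.

Lemma tril_Phi c : tril c -> tril (Phi c).
Proof.
move=> [t1 t2 t3]; split=> [y w|x w|x y].
- apply: (allin (f := fun a z => \sum_(r' <- al y) c a r'.1 (z * r'.2 * w))).
  split=> [z|a]; apply: lin_sumf => r'; first exact: t1.
  exact: (lin_comp (t3 _ _) (lmap_comp (lmap_mulr _) (lmap_mulr _))).
- apply: lin_sumf => r.
  apply: (allin (f := fun a z => c r.1 a (r.2 * z * w))).
  split=> [z|a]; first exact: t2.
  exact: (lin_comp (t3 _ _) (lmap_comp (lmap_mulr _) (lmap_mull _))).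
- apply: lin_sumf => r; apply: lin_sumf => r'.
  exact: (lin_comp (t3 _ _) (lmap_mull _)).
Qed.

Lemma tril_Om c : tril c -> tril (Om c).
Proof.
move=> /tril_Phi [t1 t2 t3]; split=> [b w|a w|a b].
- apply: (galin (f := fun z t => \sum_(q' <- ga b) Phi c z (S t * q'.1) (S q'.2 * w))).
  split=> [t|z]; apply: lin_sumf => q'; first exact: t1.
  exact: (lin_comp (t2 _ _) (lmap_comp (lmap_mulr _) Slin)).
- apply: lin_sumf => q.
  apply: (galin (f := fun z t => Phi c q.1 (S q.2 * z) (S t * w))).
  split=> [t|z]; first exact: (lin_comp (t2 _ _) (lmap_mull _)).
  exact: (lin_comp (t3 _ _) (lmap_comp (lmap_mulr _) Slin)).
- apply: lin_sumf => q; apply: lin_sumf => q'.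
  exact: (lin_comp (t3 _ _) (lmap_mull _)).
Qed.

Lemma tril_Cp c : tril c -> tril (Cp c).
Proof.
move=> /tril_Om [t1 t2 t3]; split=> [b m|a m|a b].
- apply: (Dlin (f := fun p1 p2 => Om c p1 (p2 * b) m)).
  split=> [p2|p1]; first exact: t1.
  exact: (lin_comp (t2 _ _) (lmap_mulr _)).
- apply: lin_sumf => p; exact: (lin_comp (t2 _ _) (lmap_mull _)).
- apply: lin_sumf => p; exact: t3.
Qed.

Lemma ML c x y : tril c -> \sum_(p <- D x) Om c p.1 (p.2 * y) 1 = c x y 1.
Proof.
move=> tc; symmetry.
transitivity (\sum_(q <- ga x) \sum_(q' <- ga y) Phi c q.1 q'.1 (S q'.2 * S q.2)).
  rewrite -(StepA x y tc); apply: eq_bigr => q _; apply: eq_bigr => q' _.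
  by rewrite /Phi; apply: eq_bigr => r _; apply: eq_bigr => r' _; rewrite ?mulrA.
transitivity (\sum_(q <- ga x) \sum_(q' <- ga y) \sum_(r <- al q.1)
   \sum_(m <- al (r.2 * q'.1)) Om c r.1 m.1 (m.2 * (S q'.2 * S q.2))).
  apply: eq_bigr => q _; apply: eq_bigr => q' _.
  rewrite -(StepC q.1 q'.1 (S q'.2 * S q.2) (tril_Phi tc)).
  apply: eq_bigr => r _; apply: eq_bigr => m _; rewrite /Om.
  by apply: eq_bigr => s _; apply: eq_bigr => s' _; rewrite ?mulrA.
transitivity (\sum_(q <- ga x) \sum_(q' <- ga y) \sum_(r <- al q.1) \sum_(r' <- al q'.1)
   \sum_(p <- D r.1) Om c p.1 (p.2 * r'.1) (r.2 * r'.2 * (S q'.2 * S q.2))).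
  apply: eq_bigr => q _; apply: eq_bigr => q' _.
  by rewrite (StepD _ _ _ (tril_Om tc)).
transitivity (Cp c x y 1); last by []. rewrite -(StepA x y (tril_Cp tc)) /Cp.
apply: eq_bigr => q _; apply: eq_bigr => q' _.
by apply: eq_bigr => r _; apply: eq_bigr => r' _; rewrite ?mulrA.
Qed.


Lemma lin_ext (V : lmodType k) (F G : V -> k) : (forall x, F x = G x) -> lin F -> lin G.
Proof. by move=> e' hF a x y; rewrite -!e'. Qed.

Section Anti.
Variable phi : Z -> k.
Hypothesis phil : lin phi.
Hypothesis phi1 : phi 1 = 1.

Definition R (a : H) : H :=
  \sum_(q <- ga a) \sum_(r <- al (S q.2)) phi (q.1 * r.2) *: r.1.

Lemma psi_R (psi : H -> k) a : lin psi ->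
  psi (R a) = \sum_(q <- ga a) \sum_(r <- al (S q.2)) phi (q.1 * r.2) * psi r.1.
Proof.
move=> lp; rewrite /R (lin_sum _ _ lp); apply: eq_bigr => q _.
rewrite (lin_sum _ _ lp); apply: eq_bigr => r _; exact: linZ.
Qed.

Lemma bil_phipsi (psi : H -> k) (u : H) (z : Z) : lin psi ->
  bil (fun x z' => phi (z * z') * psi (u * x)).
Proof.
move=> lp; split=> [z'|x].
- exact: (lin_mull _ (lin_comp lp (lmap_mull _))).
- exact: (lin_mulr _ (lin_comp phil (lmap_mull _))).
Qed.

Lemma R_lmap : lmap R.
Proof.
move=> a x y; apply: sep_eq => psi lp.
rewrite (linD _ _ lp) (linZ _ _ lp) !psi_R //.
pose f := fun z t => \sum_(r <- al (S t)) phi (z * r.2) * psi r.1.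
have bf : bil f.
  split=> [t|z].
  - apply: lin_sumf => r; exact: (lin_mulr _ (lin_comp phil (lmap_mulr _))).
  - apply: (@lin_comp k T Z (fun z' => \sum_(r <- al z') phi (z * r.2) * psi r.1) S _ Slin).
    apply: (lin_ext _ (allin (bil_phipsi 1 z lp))) => z' /=.
    by apply: eq_bigr => r _; rewrite mul1r.
exact: (galin bf).
Qed.

Lemma RI a : \sum_(p <- D a) p.1 * R p.2 = e a *: 1.
Proof.
apply: sep_eq => psi lp.
rewrite (lin_sum _ _ lp) (linZ _ _ lp).
pose cR := fun x z t => \sum_(r <- al (S t)) phi (z * r.2) * psi (x * r.1).
transitivity (\sum_(p <- D a) \sum_(q <- ga p.2) cR p.1 q.1 q.2).
  apply: eq_bigr => p _; rewrite (psi_R _ (lin_comp lp (lmap_mull p.1))) //.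
rewrite -(G1 (c := cR)); last first.
  split=> [z t|x t|x z].
  - apply: lin_sumf => r; exact: (lin_mull _ (lin_comp lp (lmap_mulr _))).
  - apply: lin_sumf => r; exact: (lin_mulr _ (lin_comp phil (lmap_mulr _))).
  - exact: (lin_comp (allin (bil_phipsi x z lp)) Slin).
pose L := fun z => \sum_(m <- al z) phi m.2 * psi m.1.
have bL : bil (fun x z => phi z * psi x).
  split=> [z|x]; [exact: (lin_mull _ lp)|exact: (lin_mulr _ phil)].
have lL : lin L := allin bL.
transitivity (\sum_(q <- ga a) L (q.1 * S q.2)).
  apply: eq_bigr => q _ /=; rewrite /L (almul bL).
  by apply: eq_bigr => s _; apply: eq_bigr => r _.
by rewrite -(lin_sum _ _ lL) G2 (linZ _ _ lL) /L (al1 bL) phi1 mul1r.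
Qed.

Lemma LI a : \sum_(p <- D a) R p.1 * p.2 = e a *: 1.
Proof.
apply: sep_eq => psi lp.
pose c := fun (x y : H) (w : Z) => e x * psi y * phi w.
have tc : tril c.
  split=> [y w|x w|x y].
  - exact: (lin_mulr _ (lin_mulr _ elin)).
  - exact: (lin_mulr _ (lin_mull _ lp)).
  - exact: (lin_mull _ phil).
have [o1 o2 o3] := tril_Om tc.
pose G := fun x y => Om c x y 1.
pose L' := fun y => \sum_(q <- D y) psi (R q.1 * q.2).
have bR : bil (fun u v => psi (R u * v)).
  split=> [v|u].
  - exact: (lin_comp lp (lmap_comp (lmap_mulr _) R_lmap)).
  - exact: (lin_comp lp (lmap_mull _)).
have lL' : lin L' := Dlin bR.
transitivity (\sum_(p <- D a) \sum_(q <- D p.2) c p.1 (R q.1 * q.2) 1).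
  rewrite (lin_sum _ _ lp).
  transitivity (L' a); first by [].
  rewrite -{1}(cuL a) (lin_sum _ _ lL'); apply: eq_bigr => p _.
  rewrite (linZ _ _ lL') /L' mulr_sumr; apply: eq_bigr => q _.
  by rewrite /c phi1 mulr1.
transitivity (\sum_(p <- D a) \sum_(q <- D p.2) \sum_(s <- D p.1) G s.1 (s.2 * (R q.1 * q.2))).
  by apply: eq_bigr => p _; apply: eq_bigr => q _; rewrite /G ML.
pose c1 := fun x1 x2 x3 => \sum_(q <- D x3) G x1 (x2 * (R q.1 * q.2)).
have tc1 : tril c1.
  split=> [x2 x3|x1 x3|x1 x2].
  - by apply: lin_sumf => q; exact: o1.
  - by apply: lin_sumf => q; exact: (lin_comp (o2 _ _) (lmap_mulr _)).
  - apply: (Dlin (f := fun u v => G x1 (x2 * (R u * v)))); split=> [v|u].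
    + exact: (lin_comp (o2 _ _) (lmap_comp (lmap_mull _) (lmap_comp (lmap_mulr _) R_lmap))).
    + exact: (lin_comp (o2 _ _) (lmap_comp (lmap_mull _) (lmap_mull _))).
transitivity (\sum_(p <- D a) \sum_(s <- D p.1) c1 s.1 s.2 p.2).
  by apply: eq_bigr => p _; rewrite exchange_big.
rewrite Dco //.
transitivity (\sum_(p <- D a) G p.1 p.2).
  apply: eq_bigr => p _.
  pose c2 := fun x1 x2 x3 => G p.1 (x1 * (R x2 * x3)).
  have tc2 : tril c2.
    split=> [x2 x3|x1 x3|x1 x2].
    - exact: (lin_comp (o2 _ _) (lmap_mulr _)).
    - exact: (lin_comp (o2 _ _) (lmap_comp (lmap_mull _) (lmap_comp (lmap_mulr _) R_lmap))).
    - exact: (lin_comp (o2 _ _) (lmap_comp (lmap_mull _) (lmap_mull _))).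
  transitivity (\sum_(s <- D p.2) \sum_(q <- D s.2) c2 s.1 q.1 q.2); first by [].
  rewrite -Dco //.
  transitivity (\sum_(s <- D p.2) G p.1 ((\sum_(q <- D s.1) q.1 * R q.2) * s.2)).
    apply: eq_bigr => s _; rewrite (lmap_sum _ _ (lmap_mulr _)).
    rewrite /G (lin_sum _ _ (o2 _ _)); apply: eq_bigr => q _.
    by rewrite /c2 /G mulrA.
  rewrite -[p.2 in RHS](cuL p.2) /G (lin_sum _ _ (o2 _ _)); apply: eq_bigr => s _.
  by rewrite RI -scalerAl mul1r.
transitivity (\sum_(p <- D a) G p.1 (p.2 * 1)).
  by apply: eq_bigr => p _; rewrite mulr1.
by rewrite /G ML // /c (linZ _ _ lp) phi1 mulr1.
Qed.

End Anti.

Lemma core_antipode (Z1 : (1 : Z) != 0) : exists SH : H -> H, [/\ lmap SH,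
  (forall a, \sum_(p <- D a) SH p.1 * p.2 = e a *: 1) &
  (forall a, \sum_(p <- D a) p.1 * SH p.2 = e a *: 1)].
Proof.
have [phi [phil phi1]] := sep_exists Z1.
by exists (R phi); split; [exact: R_lmap|exact: LI|exact: RI].
Qed.

End Core.

Section Conv.
Variable k : fieldType.

Lemma bil_bilin (U V : lmodType k) (f : U -> V -> k) : bil f -> bilin f.
Proof. move=> [h1 h2]; split=> a u u' v; [exact: (h1 v a u u')|exact: (h2 u a u' v)]. Qed.

Lemma tril_trilin (U V W : lmodType k) (c : U -> V -> W -> k) : tril c -> trilin c.
Proof. move=> [h1 h2 h3]; split=> a u u' v; [move=> w; exact: (h1 v w a u u')|move=> w; exact: (h2 u w a u' v)|move=> w; exact: (h3 u u' a v w)]. Qed.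

Lemma teq2_use (U V : lmodType k) (t t' : seq (U * V)) (f : U -> V -> k) :
  teq2 t t' -> bil f -> \sum_(p <- t) f p.1 p.2 = \sum_(p <- t') f p.1 p.2.
Proof. by move=> h bf; apply: h; exact: bil_bilin. Qed.

Lemma teq3_use (U V W : lmodType k) (t t' : seq (U * V * W)) (c : U -> V -> W -> k) :
  teq3 t t' -> tril c -> \sum_(p <- t) c p.1.1 p.1.2 p.2 = \sum_(p <- t') c p.1.1 p.1.2 p.2.
Proof. by move=> h tc; apply: h; exact: tril_trilin. Qed.

Lemma tlin_lin (X U V : lmodType k) (F : X -> seq (U * V)) : tlinear F ->
  forall f : U -> V -> k, bil f -> lin (fun x => \sum_(p <- F x) f p.1 p.2).
Proof.
move=> hF f bf a x y; have := teq2_use (hF a x y) bf; move=> ->; rewrite big_cat big_map /= mulr_sumr.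
congr (_ + _); apply: eq_bigr => p _; have [h1 _] := bf; by rewrite (linZ _ _ (h1 p.2)).
Qed.

Lemma tmapl_sum (U V W X : Type) (f : U -> seq (V * W)) (t : seq (U * X)) (c : V -> W -> X -> k) :
  \sum_(p <- tmap_l f t) c p.1.1 p.1.2 p.2 = \sum_(p <- t) \sum_(q <- f p.1) c q.1 q.2 p.2.
Proof. by rewrite /tmap_l big_allpairs_dep. Qed.

Lemma tmapr_sum (U V W X : Type) (f : X -> seq (V * W)) (t : seq (U * X)) (c : U -> V -> W -> k) :
  \sum_(p <- tmap_r f t) c p.1.1 p.1.2 p.2 = \sum_(p <- t) \sum_(q <- f p.2) c p.1 q.1 q.2.
Proof. by rewrite /tmap_r big_allpairs_dep. Qed.

Lemma teq3_lr (U V W X Y : lmodType k) (f : U -> seq (V * W)) (t : seq (U * X))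
  (g : Y -> seq (W * X)) (s : seq (V * Y)) (c : V -> W -> X -> k) :
  teq3 (tmap_l f t) (tmap_r g s) -> tril c ->
  \sum_(p <- t) \sum_(q <- f p.1) c q.1 q.2 p.2 = \sum_(p <- s) \sum_(q <- g p.2) c p.1 q.1 q.2.
Proof. by move=> h tc; have := teq3_use h tc; rewrite tmapl_sum tmapr_sum. Qed.

Lemma teq3_rl (U V W X Y : lmodType k) (f : U -> seq (V * W)) (t : seq (U * X))
  (g : Y -> seq (W * X)) (s : seq (V * Y)) (c : V -> W -> X -> k) :
  teq3 (tmap_r g s) (tmap_l f t) -> tril c ->
  \sum_(p <- s) \sum_(q <- g p.2) c p.1 q.1 q.2 = \sum_(p <- t) \sum_(q <- f p.1) c q.1 q.2 p.2.
Proof. by move=> h tc; have := teq3_use h tc; rewrite tmapl_sum tmapr_sum. Qed.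

Lemma tmul_sum (U V : algType k) (t s : seq (U * V)) (f : U -> V -> k) :
  \sum_(p <- tmul t s) f p.1 p.2 = \sum_(p <- t) \sum_(q <- s) f (p.1 * q.1) (p.2 * q.2).
Proof. by rewrite /tmul big_allpairs_dep. Qed.

Lemma mk_lin (A : algType k) (f : A -> A) : lmap f -> exists g : {linear A -> A}, forall x, g x = f x.
Proof.
move=> hf.
by exists (HB.pack_for {linear A -> A} f (GRing.isLinear.Build k A A *:%R f (fun a x y => hf a x y))).
Qed.

End Conv.

Lemma side_A (k : fieldType) (A B Z T : algType k)
  (DA : A -> seq (A * A)) (eA : A -> k)
  (DB : B -> seq (B * B)) (eB : B -> k)
  (alpha : Z -> seq (A * Z)) (beta : Z -> seq (Z * B))
  (gamma : A -> seq (Z * T)) (delta : B -> seq (T * Z))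
  (S : {linear T -> Z}) :
  hopf_galois_system DA eA DB eB alpha beta gamma delta S ->
  has_antipode DA eA.
Proof.
move=> [[bA bB] [[amor aco acu] bmor bco bcu bicom] [gmor dmor X Gco Dco'] [h4a h4b]].
have [[Dl D1 Dm] [el e1 em] Dco cuL cuR] := bA.
have [al a1 am] := amor.
have [gl g1 gm] := gmor.
have Slin : lmap S by move=> a x y; rewrite linearP.
have Star : forall f : Z -> Z -> k, bil f -> forall z,
  \sum_(p <- alpha z) \sum_(q <- gamma p.1) f q.1 (S q.2 * p.2) = f z 1.
  move=> f bf z; have [f1 f2] := bf.
  have tc : tril (fun z1 (t : T) z2 => f z1 (S t * z2)).
    split=> [t z2|z1 z2|z1 t].
    - exact: f1.
    - exact: (lin_comp (f2 _) (lmap_comp (lmap_mulr _) Slin)).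
    - exact: (lin_comp (f2 _) (lmap_mull _)).
  rewrite (teq3_lr (X z) tc) /=.
  transitivity (\sum_(p <- beta z) f (eB p.2 *: p.1) 1); last by rewrite -(bil_suml _ _ _ bf) bcu.
  apply: eq_bigr => p _; rewrite -(lin_sum _ _ (f2 _)) h4b.
  by rewrite (linZ _ _ (f2 _)) (linZ _ _ (f1 _)).
have [SH [SHl SHL SHR]] := core_antipode (D := DA) (e := eA) (al := alpha) (ga := gamma) Slin
  (tlin_lin Dl)
  (fun c tc x => teq3_lr (Dco x) tc)
  el cuL cuR (tlin_lin al)
  (fun f bf x y => ltac:(by rewrite (teq2_use (am x y) bf) tmul_sum))
  (fun f bf => ltac:(by rewrite (teq2_use a1 bf) big_seq1))
  (fun c tc z => teq3_lr (aco z) tc)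
  (tlin_lin gl)
  (fun c tc a => teq3_lr (Gco a) tc)
  h4a Star (oner_neq0 Z).
have [g gE] := mk_lin SHl.
exists g; split=> a; [rewrite -SHL|rewrite -SHR]; apply: eq_bigr => p _; by rewrite gE.
Qed.

Section Op.
Variable (k : fieldType) (A : algType k).
Record opA := Op { unop : A }.
Lemma unopK : cancel unop Op. Proof. by case. Qed.
HB.instance Definition _ := Equality.copy opA (can_type unopK).
HB.instance Definition _ := Choice.copy opA (can_type unopK).
Definition op_zero := Op 0.
Definition op_add x y := Op (unop x + unop y).
Definition op_opp x := Op (- unop x).
Lemma op_addA : associative op_add. Proof. by move=> x y z; rewrite /op_add addrA. Qed.
Lemma op_addC : commutative op_add. Proof. by move=> x y; rewrite /op_add addrC. Qed.
Lemma op_add0 : left_id op_zero op_add. Proof. by move=> [x]; rewrite /op_add add0r. Qed.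
Lemma op_addN : left_inverse op_zero op_opp op_add. Proof. by move=> [x]; rewrite /op_add addNr. Qed.
HB.instance Definition _ := GRing.isZmodule.Build opA op_addA op_addC op_add0 op_addN.
Definition op_one := Op 1.
Definition op_mul x y := Op (unop y * unop x).
Lemma op_mulA : associative op_mul. Proof. by move=> x y z; rewrite /op_mul mulrA. Qed.
Lemma op_mul1 : left_id op_one op_mul. Proof. by move=> [x]; rewrite /op_mul mulr1. Qed.
Lemma op_mul1r : right_id op_one op_mul. Proof. by move=> [x]; rewrite /op_mul mul1r. Qed.
Lemma op_mulDl : left_distributive op_mul op_add. Proof. by move=> x y z; rewrite /op_mul /op_add mulrDr. Qed.
Lemma op_mulDr : right_distributive op_mul op_add. Proof. by move=> x y z; rewrite /op_mul /op_add mulrDl. Qed.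
Lemma op_neq0 : op_one != 0. Proof. apply/eqP => -[]; exact/eqP/oner_neq0. Qed.
HB.instance Definition _ := GRing.Zmodule_isNzRing.Build opA op_mulA op_mul1 op_mul1r op_mulDl op_mulDr op_neq0.
Definition op_scale (a : k) x := Op (a *: unop x).
Lemma op_scaleA a b v : op_scale a (op_scale b v) = op_scale (a * b) v. Proof. by rewrite /op_scale scalerA. Qed.
Lemma op_scale1 : left_id 1 op_scale. Proof. by move=> [x]; rewrite /op_scale scale1r. Qed.
Lemma op_scaleDr : right_distributive op_scale +%R. Proof. by move=> a x y; rewrite /op_scale /= /op_add scalerDr. Qed.
Lemma op_scaleDl v : {morph op_scale^~ v : a b / a + b}. Proof. by move=> a b; rewrite /op_scale /= /op_add scalerDl. Qed.
HB.instance Definition _ := GRing.Zmodule_isLmodule.Build k opA op_scaleA op_scale1 op_scaleDr op_scaleDl.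
Lemma op_scalerAl a (u v : opA) : op_scale a (u * v) = (op_scale a u) * v. Proof. by rewrite /op_scale /= /op_mul scalerAr. Qed.
HB.instance Definition _ := GRing.Lmodule_isLalgebra.Build k opA op_scalerAl.
Lemma op_scalerAr a (u v : opA) : a *: (u * v) = u * (a *: v). Proof. by rewrite /GRing.scale /= /op_scale /= /op_mul scalerAl. Qed.
HB.instance Definition _ := GRing.Lalgebra_isAlgebra.Build k opA op_scalerAr.

Lemma unop_lmap : lmap unop. Proof. by []. Qed.
Lemma Op_lmap : lmap Op. Proof. by []. Qed.
Lemma unop_mul (x y : opA) : unop (x * y) = unop y * unop x. Proof. by []. Qed.
Lemma unop1 : unop 1 = 1. Proof. by []. Qed.
Lemma Op_mul (x y : A) : Op x * Op y = Op (y * x). Proof. by []. Qed.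
Lemma Op_scale a (x : A) : a *: Op x = Op (a *: x). Proof. by []. Qed.
Lemma Op1 : Op 1 = 1. Proof. by []. Qed.
Lemma unop_sum I (l : seq I) (g : I -> opA) : unop (\sum_(i <- l) g i) = \sum_(i <- l) unop (g i).
Proof. exact: lmap_sum unop_lmap. Qed.
Lemma unop_inj : injective unop. Proof. exact: can_inj unopK. Qed.
End Op.

Lemma side_B (k : fieldType) (A B Z T : algType k)
  (DA : A -> seq (A * A)) (eA : A -> k)
  (DB : B -> seq (B * B)) (eB : B -> k)
  (alpha : Z -> seq (A * Z)) (beta : Z -> seq (Z * B))
  (gamma : A -> seq (Z * T)) (delta : B -> seq (T * Z))
  (S : {linear T -> Z}) :
  hopf_galois_system DA eA DB eB alpha beta gamma delta S ->
  has_antipode DB eB.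
Proof.
move=> [[bA bB] [[amor aco acu] bmor bco bcu bicom] [gmor dmor X Gco DBco] [h4a h4b]].
have [[Dl D1 Dm] [el e1 em] Dco cuL cuR] := bB.
have [bl b1 bm] := bmor.
have [dl d1 dm] := dmor.
pose D' := fun b : opA B => [seq (Op p.2, Op p.1) | p <- DB (unop b)].
pose e' := fun b : opA B => eB (unop b).
pose al' := fun z : opA Z => [seq (Op p.2, Op p.1) | p <- beta (unop z)].
pose ga' := fun b : opA B => [seq (Op p.2, p.1) | p <- delta (unop b)].
pose S' := fun t : T => Op (S t).
have Slin : lmap S by move=> a x y; rewrite linearP.
have Slin' : lmap S' by move=> a x y; rewrite /S' linearP.
have Dlin' : forall f : opA B -> opA B -> k, bil f -> lin (fun x => \sum_(p <- D' x) f p.1 p.2).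
  move=> f [f1 f2].
  have bg : bil (fun u v : B => f (Op v) (Op u)).
    by split=> [v|u]; [exact: (lin_comp (f2 _) (@Op_lmap _ _))|exact: (lin_comp (f1 _) (@Op_lmap _ _))].
  apply: (lin_ext _ (lin_comp (tlin_lin Dl bg) (@unop_lmap _ _))) => x /=.
  by rewrite /D' big_map.
have Dco' : forall c : opA B -> opA B -> opA B -> k, tril c -> forall x,
    \sum_(p <- D' x) \sum_(q <- D' p.1) c q.1 q.2 p.2 =
    \sum_(p <- D' x) \sum_(q <- D' p.2) c p.1 q.1 q.2.
  move=> c [t1 t2 t3] x.
  have tc0 : tril (fun u v w : B => c (Op w) (Op v) (Op u)).
    split=> [v w|u w|u v].
    - exact: (lin_comp (t3 _ _) (@Op_lmap _ _)).
    - exact: (lin_comp (t2 _ _) (@Op_lmap _ _)).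
    - exact: (lin_comp (t1 _ _) (@Op_lmap _ _)).
  rewrite /D' !big_map /=.
  under eq_bigr => p _ do rewrite big_map /=.
  under [RHS]eq_bigr => p _ do rewrite big_map /=.
  symmetry; exact: (teq3_lr (Dco (unop x)) tc0).
have elin' : lin e' by exact: (lin_comp el (@unop_lmap _ _)).
have cuL' : forall x, \sum_(p <- D' x) e' p.1 *: p.2 = x.
  by move=> x; apply: (@unop_inj _ B); rewrite unop_sum /D' big_map; exact: cuR.
have cuR' : forall x, \sum_(p <- D' x) e' p.2 *: p.1 = x.
  by move=> x; apply: (@unop_inj _ B); rewrite unop_sum /D' big_map; exact: cuL.
have bsw : forall (U V : algType k) (f : opA U -> opA V -> k), bil f -> bil (fun (v : V) (u : U) => f (Op u) (Op v)).
  move=> U V f [f1 f2].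
  by split=> [v|u]; [exact: (lin_comp (f2 _) (@Op_lmap _ _))|exact: (lin_comp (f1 _) (@Op_lmap _ _))].
have allin' : forall f : opA B -> opA Z -> k, bil f -> lin (fun z => \sum_(p <- al' z) f p.1 p.2).
  move=> f bf.
  apply: (lin_ext _ (lin_comp (tlin_lin bl (bsw _ _ _ bf)) (@unop_lmap _ _))) => x /=.
  by rewrite /al' big_map.
have almul' : forall f : opA B -> opA Z -> k, bil f -> forall x y,
    \sum_(p <- al' (x * y)) f p.1 p.2 =
    \sum_(p <- al' x) \sum_(q <- al' y) f (p.1 * q.1) (p.2 * q.2).
  move=> f bf x y.
  rewrite /al' big_map /=.
  have := teq2_use (bm (unop y) (unop x)) (bsw _ _ _ bf); rewrite /= => ->.
  rewrite (tmul_sum _ _ (fun (v : Z) (u : B) => f (Op u) (Op v))) big_map exchange_big; apply: eq_bigr => p _.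
  by rewrite big_map; apply: eq_bigr => q _.
have al1' : forall f : opA B -> opA Z -> k, bil f -> \sum_(p <- al' 1) f p.1 p.2 = f 1 1.
  move=> f bf; rewrite /al' big_map /=.
  by have := teq2_use b1 (bsw _ _ _ bf); rewrite /= big_seq1 => ->.
have alco' : forall c : opA B -> opA B -> opA Z -> k, tril c -> forall z,
    \sum_(p <- al' z) \sum_(q <- D' p.1) c q.1 q.2 p.2 =
    \sum_(p <- al' z) \sum_(q <- al' p.2) c p.1 q.1 q.2.
  move=> c [t1 t2 t3] z.
  have tc0 : tril (fun (z1 : Z) (b1 b2 : B) => c (Op b2) (Op b1) (Op z1)).
    split=> [u v|u v|u v].
    - exact: (lin_comp (t3 _ _) (@Op_lmap _ _)).
    - exact: (lin_comp (t2 _ _) (@Op_lmap _ _)).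
    - exact: (lin_comp (t1 _ _) (@Op_lmap _ _)).
  rewrite /al' /D' !big_map /=.
  under eq_bigr => p _ do rewrite big_map /=.
  under [RHS]eq_bigr => p _ do rewrite big_map /=.
  symmetry; exact: (teq3_lr (bco (unop z)) tc0).
have galin' : forall f : opA Z -> T -> k, bil f -> lin (fun a => \sum_(p <- ga' a) f p.1 p.2).
  move=> f [f1 f2].
  have bg : bil (fun (t : T) (z : Z) => f (Op z) t).
    by split=> [z|t]; [exact: f2|exact: (lin_comp (f1 _) (@Op_lmap _ _))].
  apply: (lin_ext _ (lin_comp (tlin_lin dl bg) (@unop_lmap _ _))) => x /=.
  by rewrite /ga' big_map.
have G1' : forall c : opA B -> opA Z -> T -> k, tril c -> forall a,
    \sum_(p <- ga' a) \sum_(q <- al' p.1) c q.1 q.2 p.2 =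
    \sum_(p <- D' a) \sum_(q <- ga' p.2) c p.1 q.1 q.2.
  move=> c [t1 t2 t3] a.
  have tc0 : tril (fun (t : T) (z : Z) (b : B) => c (Op b) (Op z) t).
    split=> [u v|u v|u v].
    - exact: t3.
    - exact: (lin_comp (t2 _ _) (@Op_lmap _ _)).
    - exact: (lin_comp (t1 _ _) (@Op_lmap _ _)).
  rewrite /al' /D' /ga' !big_map /=.
  under eq_bigr => p _ do rewrite big_map /=.
  under [RHS]eq_bigr => p _ do rewrite big_map /=.
  exact: (teq3_rl (DBco (unop a)) tc0).
have G2' : forall a, \sum_(p <- ga' a) p.1 * S' p.2 = e' a *: 1.
  by move=> a; apply: (@unop_inj _ Z); rewrite unop_sum /ga' big_map; exact: h4b.
have Star' : forall f : opA Z -> opA Z -> k, bil f -> forall z,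
    \sum_(p <- al' z) \sum_(q <- ga' p.1) f q.1 (S' q.2 * p.2) = f z 1.
  move=> f bf z; have [f1 f2] := bf.
  have tc0 : tril (fun (z1 : Z) (t : T) (z2 : Z) => f (Op z2) (Op (z1 * S t))).
    split=> [u v|u v|u v].
    - exact: (lin_comp (f2 _) (lmap_comp (@Op_lmap _ _) (lmap_mulr _))).
    - exact: (lin_comp (f2 _) (lmap_comp (@Op_lmap _ _) (lmap_comp (lmap_mull _) Slin))).
    - exact: (lin_comp (f1 _) (@Op_lmap _ _)).
  rewrite /al' /ga' !big_map /=.
  under eq_bigr => p _ do rewrite big_map /=.
  rewrite -(teq3_lr (X (unop z)) tc0) /=.
  transitivity (\sum_(p <- alpha (unop z)) f (eA p.1 *: Op p.2) 1).
    apply: eq_bigr => p _.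
    rewrite -(lin_sum _ _ (f2 _)) -(lmap_sum _ _ (@Op_lmap _ _)) h4a.
    by rewrite -Op_scale Op1 (linZ _ _ (f2 _)) (linZ _ _ (f1 _)).
  rewrite -(bil_suml _ _ _ bf); congr (f _ 1).
  by apply: (@unop_inj _ Z); rewrite unop_sum; exact: acu.
have [SH [SHl SHL SHR]] := core_antipode Slin' Dlin' Dco' elin' cuL' cuR' allin' almul' al1' alco'
  galin' G1' G2' Star' (oner_neq0 (opA Z)).
have SBl : lmap (fun b : B => unop (SH (Op b))).
  by move=> a x y /=; have -> : Op (a *: x + y) = a *: Op x + Op y by []; rewrite SHl.
have [g gE] := mk_lin SBl.
exists g; split=> b.
- have := congr1 (@unop _ _) (SHR (Op b)); rewrite unop_sum /D' big_map /= => <-.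
  by apply: eq_bigr => p _; rewrite gE.
- have := congr1 (@unop _ _) (SHL (Op b)); rewrite unop_sum /D' big_map /= => <-.
  by apply: eq_bigr => p _; rewrite gE.
Qed.

Theorem corollary1p3 (k : fieldType) (A B Z T : algType k)
  (DA : A -> seq (A * A)) (eA : A -> k)
  (DB : B -> seq (B * B)) (eB : B -> k)
  (alpha : Z -> seq (A * Z)) (beta : Z -> seq (Z * B))
  (gamma : A -> seq (Z * T)) (delta : B -> seq (T * Z))
  (S : {linear T -> Z}) :
  hopf_galois_system DA eA DB eB alpha beta gamma delta S ->
  has_antipode DA eA /\ has_antipode DB eB.
Proof.
move=> h; split; [exact: (side_A h)|exact: (side_B h)].
Qed.
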